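(* Let $G=(N,A)$ be a compressed $s$-$t$ DAG and let $u\in N$. Then $\mathrm{ext}(u)$ is a maximal safe sequence of $G$ (for path covers) if and only if $u$ is a leaf in both the $s$-dominator tree and the $t$-dominator tree of $G$.
   Context: An $s$-$t$ DAG is a directed acyclic graph with a unique source $s$ and a unique sink $t$ such that every node is reachable from $s$ and every node reaches $t$. A unitary path is a path in which every node other than the first has indegree exactly one and every node other than the last has outdegree exactly one. The DAG is compressed if it equals its own compressed graph (the graph obtained by contracting every maximal unitary path into a single node), i.e. it has no unitary path with two or more nodes; equivalently there is no arc $uv$ with out-neighbourhood of $u$ equal to $\{v\}$ and in-neighbourhood of $v$ equal to $\{u\}$. A node $u$ $s$-dominates $v$ if every $s$-$v$ path contains $u$ ($u$ strictly $s$-dominates $v$ if moreover $u\ne v$); $v$ $t$-dominates $u$ if every $u$-$t$ path contains $v$. For $v\neq s$, the immediate $s$-dominator of $v$ is the strict $s$-dominator of $v$ that is $s$-dominated by all strict $s$-dominators of $v$. The $s$-dominator tree is the tree on $N$ rooted at $s$ where the parent of each $v\ne s$ is its immediate $s$-dominator; the $t$-dominator tree is defined symmetrically (rooted at $t$). A leaf is a node with no children. For a node $v$, $\mathrm{ext}(v)$ is the concatenation of the sequence of $s$-$v$ cutnodes (nodes on every $s$-$v$ path, in path order) with the sequence of $v$-$t$ cutnodes, with the repeated occurrence of $v$ removed. A sequence of nodes $X=u_1,\dots,u_\ell$ is a list with a $u_i$-$u_{i+1}$ path for all $i$; it is a subsequence of $Y$ if every node of $X$ occurs in $Y$. A path cover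 is a set of $s$-$t$ paths covering all nodes. $X$ is safe if in every path cover it is a subsequence of some path of the cover (sequences contained in no $s$-$t$ path are unsafe); it is maximal safe if it is safe and not a proper subsequence of another safe sequence. *)

(* Defs.v *)
From mathcomp Require Import all_boot.
From mathcomp Require Import boolp.

Set Implicit Arguments.
Unset Strict Implicit.
Unset Printing Implicit Defensive.

Section DAG.
Variables (T : finType) (e : rel T) (s t : T).

(* A walk from x is x :: p with path e x p; it ends at last x p. *)

Definition acyclic : Prop :=
  forall x p, path e x p -> last x p = x -> p = [::].

Definition st_dag : Prop :=
  [/\ acyclic,
      (forall v, (forall w, ~~ e w v) <-> v = s),
      (forall v, (forall w, ~~ e v w) <-> v = t),
      (forall v, connect e s v) &
      (forall v, connect e v t)].

Definition compressed : Prop :=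
  forall u v, e u v ->
    ~ ((forall w, e u w -> w = v) /\ (forall w, e w v -> w = u)).

Definition sdom (u v : T) : Prop :=
  forall p, path e s p -> last s p = v -> u \in s :: p.

Definition tdom (v u : T) : Prop :=
  forall p, path e u p -> last u p = t -> v \in u :: p.

(* w is the immediate s-dominator of v (i.e. the parent of v in the
   s-dominator tree) *)
Definition sidom (w v : T) : Prop :=
  [/\ v <> s, w <> v, sdom w v &
      forall x, x <> v -> sdom x v -> sdom x w].

(* w is the immediate t-dominator of v (parent in the t-dominator tree) *)
Definition tidom (w v : T) : Prop :=
  [/\ v <> t, w <> v, tdom w v &
      forall x, x <> v -> tdom x v -> tdom x w].

Definition sleaf (u : T) : Prop := forall v, ~ sidom u v.
Definition tleaf (u : T) : Prop := forall v, ~ tidom u v.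

Definition s_cuts (u : T) : seq T :=
  sort (connect e) (enum [set x | `[< sdom x u >]]).
Definition t_cuts (u : T) : seq T :=
  sort (connect e) (enum [set x | `[< tdom x u >]]).

(* ext(u): s-u cutnodes followed by u-t cutnodes, repeated u removed
   (u is the last of s_cuts u and the first of t_cuts u) *)
Definition ext (u : T) : seq T := s_cuts u ++ behead (t_cuts u).

Definition is_sequence (X : seq T) : Prop := sorted (connect e) X.

Definition subseqn (X Y : seq T) : Prop := {subset X <= Y}.

Definition st_path (P : seq T) : Prop :=
  exists p, [/\ P = s :: p, path e s p & last s p = t].

Definition path_cover (C : seq (seq T)) : Prop :=
  (forall P, P \in C -> st_path P) /\
  (forall v, exists2 P, P \in C & v \in P).

Definition safe (X : seq T) : Prop :=
  [/\ is_sequence X,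
      (exists P, st_path P /\ subseqn X P) &
      (forall C, path_cover C -> exists2 P, P \in C & subseqn X P)].

Definition max_safe (X : seq T) : Prop :=
  safe X /\
  ~ (exists Y, [/\ safe Y, subseqn X Y & exists2 y, y \in Y & y \notin X]).

End DAG.

(* Main.v *)
Require Import Defs.
From mathcomp Require Import all_boot.
From mathcomp Require Import boolp.

Set Implicit Arguments.
Unset Strict Implicit.
Unset Printing Implicit Defensive.

Lemma walk_split (T : finType) (x y : T) p :
  y \in x :: p -> exists p1 p2, p = p1 ++ p2 /\ last x p1 = y.
Proof. by case/splitPl=> p1 p2 Hl; exists p1, p2. Qed.

Lemma acyc_uniq (T : finType) (e : rel T) (Hac : acyclic e) x p :
  path e x p -> uniq (x :: p).
Proof.
elim: p x => [|y p IH] x //= /andP [exy Hp].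
have Hq : path e x (y :: p) by rewrite /= exy.
have := IH y Hp => /= /andP [-> ->]; rewrite !andbT.
apply/negP => Hx.
move: (y :: p) Hq Hx => q Hq Hx.
move: Hq; case: (path.splitP Hx) => p1 p2; rewrite cat_path => /andP [H1 _].
have := Hac _ _ H1 (last_rcons _ _ _).
by case: p1 {H1}.
Qed.

Lemma no_cycle (T : finType) (e : rel T) (Hac : acyclic e) x y :
  connect e x y -> connect e y x -> x = y.
Proof.
move=> /connectP [p1 H1 ->] /connectP [p2 H2 E].
have := Hac x (p1 ++ p2).
rewrite cat_path H1 H2 last_cat -E => /(_ erefl erefl).
by case: p1 {H1 E H2}.
Qed.

Lemma irr_acyc (T : finType) (e : rel T) (Hac : acyclic e) a : ~~ e a a.
Proof.
apply/negP => H.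
by have := Hac a [:: a]; rewrite /= H => /(_ erefl erefl).
Qed.

Lemma mem_walk_connect (T : finType) (e : rel T) x p y :
  path e x p -> y \in x :: p -> connect e y (last x p).
Proof.
move=> Hp H; move: Hp; case/splitPl: H => p1 p2 Hl.
rewrite cat_path last_cat Hl => /andP [_ H2].
by apply/connectP; exists p2.
Qed.

Lemma sdom_refl (T : finType) (e : rel T) s u : sdom e s u u.
Proof. by move=> p _ <-; exact: mem_last. Qed.

Lemma tdom_refl (T : finType) (e : rel T) t u : tdom e t u u.
Proof. by move=> p _ _; exact: mem_head. Qed.

Lemma sdom_s (T : finType) (e : rel T) s u : sdom e s u s -> u = s.
Proof. by move=> H; have := H [::] isT erefl; rewrite inE => /eqP. Qed.

Lemma sdom_connect (T : finType) (e : rel T) s (Hr : forall v, connect e s v) u v :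
  sdom e s u v -> connect e u v.
Proof.
move=> H; case/connectP: (Hr v) => p Hp E.
rewrite E; apply: (mem_walk_connect Hp (H p Hp (esym E))).
Qed.

Lemma tdom_connect (T : finType) (e : rel T) t (Hr : forall v, connect e v t) u v :
  tdom e t u v -> connect e v u.
Proof.
move=> H; case/connectP: (Hr v) => p Hp E.
exact: (path_connect Hp (H p Hp (esym E))).
Qed.

Lemma sdom_trans (T : finType) (e : rel T) s x u v :
  sdom e s x u -> sdom e s u v -> sdom e s x v.
Proof.
move=> Hxu Huv p Hp Hl; have H := Huv p Hp Hl; move: Hp Hl.
case/splitPl: H => p1 p2 Hl1; rewrite cat_path => /andP [H1 _] _.
by rewrite -cat_cons mem_cat (Hxu p1 H1 Hl1).
Qed.

Lemma sdom_antisym (T : finType) (e : rel T) s (Hac : acyclic e)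
  (Hr : forall v, connect e s v) u v :
  sdom e s u v -> sdom e s v u -> u = v.
Proof.
move=> H1 H2; exact: (no_cycle Hac (sdom_connect Hr H1) (sdom_connect Hr H2)).
Qed.

Lemma tdom_antisym (T : finType) (e : rel T) t (Hac : acyclic e)
  (Hr : forall v, connect e v t) u v :
  tdom e t u v -> tdom e t v u -> u = v.
Proof.
move=> H1 H2; exact: (no_cycle Hac (tdom_connect Hr H2) (tdom_connect Hr H1)).
Qed.

Lemma not_sdom (T : finType) (e : rel T) s u v :
  ~ sdom e s u v -> exists p, [/\ path e s p, last s p = v & u \notin s :: p].
Proof.
move=> H; have [p Hp] := (existsNP _).2 H; exists p.
have [a|na] := boolP (path e s p); last first.
  by exfalso; apply: Hp => a; rewrite a in na.
have [b|nb] := eqVneq (last s p) v; last first.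
  by exfalso; apply: Hp => _ b; rewrite b eqxx in nb.
have [c|nc] := boolP (u \in s :: p); first by exfalso; apply: Hp.
by [].
Qed.

Lemma not_tdom (T : finType) (e : rel T) t u v :
  ~ tdom e t u v -> exists p, [/\ path e v p, last v p = t & u \notin v :: p].
Proof.
move=> H; have [p Hp] := (existsNP _).2 H; exists p.
have [a|na] := boolP (path e v p); last first.
  by exfalso; apply: Hp => a; rewrite a in na.
have [b|nb] := eqVneq (last v p) t; last first.
  by exfalso; apply: Hp => _ b; rewrite b eqxx in nb.
have [c|nc] := boolP (u \in v :: p); first by exfalso; apply: Hp.
by [].
Qed.

Lemma chain (T : finType) (e : rel T) s (Hac : acyclic e)
  (Hr : forall v, connect e s v) x u w :
  sdom e s x w -> sdom e s u w -> sdom e s x u \/ sdom e s u x.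
Proof.
move=> Hxw Huw.
case: (pselect (sdom e s x u)) => [H|nxu]; first by left.
case: (pselect (sdom e s u x)) => [H|nux]; first by right.
exfalso.
have [a [Ha Ea xa]] := not_sdom nxu.
have [b [Hb Eb ub]] := not_sdom nux.
case/connectP: (Hr w) => p Hp Ew.
have Hx := Hxw p Hp (esym Ew).
have U := acyc_uniq Hac Hp.
move: Hp U Ew; case/splitPl: Hx => p1 p2 Hl1.
rewrite cat_path Hl1 last_cat Hl1 => /andP [Hp1 Hp2] U Ew.
case: (boolP (u \in p2)) => up2.
- have ux : u \in x :: p2 by rewrite in_cons up2 orbT.
  move: Hp2 U Ew; case/splitPl: ux => r1 r2 Hr1.
  rewrite cat_path Hr1 last_cat Hr1 => /andP [_ Hr2] U Ew.
  have := Hxw (a ++ r2).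
  rewrite cat_path Ha Ea Hr2 last_cat Ea -Ew => /(_ erefl erefl).
  rewrite -cat_cons mem_cat (negbTE xa) /= => xr2.
  move: U; rewrite -cat_cons cat_uniq => /and3P [_ /hasPn H _].
  have := H x; rewrite mem_cat xr2 orbT => /(_ erefl).
  by rewrite -Hl1 mem_last.
- have := Huw (b ++ p2).
  rewrite cat_path Hb Eb Hp2 last_cat Eb -Ew => /(_ erefl erefl).
  by rewrite -cat_cons mem_cat (negbTE ub) (negbTE up2).
Qed.

Lemma min_exists (T : finType) (e : rel T) (Hac : acyclic e) (P : T -> Prop) :
  (exists w, P w) -> exists w, P w /\ forall x, P x -> connect e x w -> x = w.
Proof.
move=> [w Pw].
suff H : forall n w, #|[pred z | connect e z w]| < n -> P w ->
  exists w, P w /\ forall x, P x -> connect e x w -> x = w.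
  exact: (H _ w (ltnSn _) Pw).
elim=> [|n IH] w' Hn Pw'; first by rewrite ltn0 in Hn.
case: (pselect (forall x, P x -> connect e x w' -> x = w')) => [H|H].
  by exists w'.
have [x Hx] := (existsNP _).2 H.
case: (pselect (P x)) => Px; last by exfalso; apply: Hx.
case: (boolP (connect e x w')) => cxw; last first.
  by exfalso; apply: Hx => _ c; rewrite c in cxw.
have nxw : x <> w' by move=> E; apply: Hx.
apply: (IH x _ Px).
rewrite ltnS in Hn; apply: leq_trans Hn.
apply: proper_card; apply/properP; split.
  apply/subsetP => z; rewrite !inE => czx; exact: connect_trans czx cxw.
exists w'; rewrite !inE ?connect0 //.
apply/negP => cwx; apply: nxw; exact: (no_cycle Hac cxw cwx).
Qed.

Lemma Leaf_s (T : finType) (e : rel T) s (Hac : acyclic e)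
  (Hr : forall v, connect e s v) u v :
  sdom e s u v -> v <> u -> exists w, sidom e s u w.
Proof.
move=> Huv nvu.
have [w [[Huw nwu] Hmin]] :=
  min_exists Hac (ex_intro (fun w => sdom e s u w /\ w <> u) v (conj Huv nvu)).
exists w; split => //.
- move=> ws; apply: nwu; rewrite ws in Huw *; by rewrite (sdom_s Huw).
- by move=> E; apply: nwu.
- move=> x nxw Hxw.
  case: (pselect (sdom e s x u)) => // nxu; exfalso.
  have [//|Hux] := chain Hac Hr Hxw Huw.
  have nxu' : x <> u by move=> E; apply: nxu; rewrite E; exact: sdom_refl.
  apply: nxw; apply: (Hmin x (conj Hux nxu')).
  exact: (sdom_connect Hr Hxw).
Qed.

Lemma Superset_s (T : finType) (e : rel T) s t u w z :
  sdom e s u w -> (sdom e s z u \/ tdom e t z u) -> (sdom e s z w \/ tdom e t z w).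
Proof.
move=> Huw [Hz|Hz]; first by left; exact: (sdom_trans Hz Huw).
case: (pselect (sdom e s z w)) => [H|nzw]; [by left|right].
apply: contrapT => nt.
have [a [Ha Ea za]] := not_sdom nzw.
have [b [Hb Eb zb]] := not_tdom nt.
have uin := Huw a Ha Ea.
move: Ha Ea za; case/splitPl: uin => a1 a2 Ea1.
rewrite cat_path last_cat Ea1 => /andP [_ Ha2] Ea za.
have := Hz (a2 ++ b).
rewrite cat_path Ha2 Ea Hb last_cat Ea Eb => /(_ erefl erefl).
rewrite in_cons mem_cat => /or3P [/eqP zu|za2|zb2].
- by move: za; rewrite zu -Ea1 -cat_cons mem_cat mem_last.
- by move: za; rewrite -cat_cons mem_cat za2 orbT.
- by move: zb; rewrite in_cons zb2 orbT.
Qed.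

Lemma L2_s (T : finType) (e : rel T) s t (Hac : acyclic e)
  (Hr : forall v, connect e s v) (Hrt : forall v, connect e v t)
  (Hcomp : compressed e) u v :
  sdom e s u v -> v <> u -> exists w, [/\ w <> u, sdom e s u w & ~ tdom e t w u].
Proof.
move=> Huv nvu; apply: contrapT => Hno.
have H : forall w, w <> u -> sdom e s u w -> tdom e t w u.
  move=> w nwu Huw; apply: contrapT => ntd; apply: Hno; by exists w.
have Hvu := H v nvu Huv.
have irr := irr_acyc Hac.
have neq_of_e : forall a b, e a b -> b <> a.
  by move=> a b eab E; move: (irr a); rewrite -{2}E eab.
have outdom : forall w, e u w -> sdom e s u w.
  move=> w euw; apply: contrapT => nd.
  have [q [Hq Eq nuq]] := not_sdom nd.
  case/connectP: (Hrt w) => r Hr' Er.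
  have := Hvu (w :: r); rewrite /= euw Hr' -Er => /(_ erefl erefl).
  rewrite in_cons => /orP [/eqP vu|vin]; first by apply: nvu.
  move: Hr' Er; case/splitPl: vin => r1 r2 Er1.
  rewrite cat_path => /andP [Hr1 _] _.
  have := Huv (q ++ r1); rewrite cat_path Hq Eq Hr1 last_cat Eq Er1.
  move=> /(_ erefl erefl); rewrite -cat_cons mem_cat (negbTE nuq) /= => ur1.
  have cwu : connect e w u by apply: (path_connect Hr1); rewrite in_cons ur1 orbT.
  apply: (neq_of_e _ _ euw); exact: (no_cycle Hac cwu (connect1 euw)).
have outt : forall w, e u w -> tdom e t w u.
  by move=> w euw; apply: H; [exact: neq_of_e | exact: outdom].
have reach2 : forall w1 w2, e u w1 -> e u w2 -> connect e w2 w1.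
  move=> w1 w2 e1 e2.
  case/connectP: (Hrt w2) => r Hr' Er.
  have := outt w1 e1 (w2 :: r); rewrite /= e2 Hr' -Er => /(_ erefl erefl).
  rewrite in_cons => /orP [/eqP wu|win]; first by exfalso; apply: (neq_of_e _ _ e1).
  exact: (path_connect Hr' win).
case/connectP: (sdom_connect Hr Huv) => [[|w0 p] Hp Ev]; first by apply: nvu.
move: Hp => /= /andP [euw0 _].
have uniqout : forall w, e u w -> w = w0.
  move=> w euw; exact: (no_cycle Hac (reach2 _ _ euw0 euw) (reach2 _ _ euw euw0)).
have := Hcomp u w0 euw0.
case: (pselect (forall w, e w w0 -> w = u)) => [Hin|Hin].
  by move=> Hc; apply: Hc; split.
move=> _; have [x Hx] := (existsNP _).2 Hin.
case: (boolP (e x w0)) => exw; last by apply: Hx => exw'; rewrite exw' in exw.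
have nxu : x <> u by move=> E; apply: Hx.
have Hux : sdom e s u x.
  move=> q Hq Eq.
  have := outdom w0 euw0 (rcons q w0).
  rewrite rcons_path Hq Eq exw last_rcons => /(_ erefl erefl).
  rewrite -rcons_cons mem_rcons in_cons => /orP [/eqP uw0|//].
  by exfalso; apply: (neq_of_e _ _ euw0).
have Hxu := H x nxu Hux.
case/connectP: (Hrt w0) => r Hr' Er.
have := Hxu (w0 :: r); rewrite /= euw0 Hr' -Er => /(_ erefl erefl).
rewrite in_cons => /orP [/eqP xu|xin]; first by apply: nxu.
have cw0x : connect e w0 x := path_connect Hr' xin.
have := no_cycle Hac cw0x (connect1 exw) => E.
by apply: (neq_of_e _ _ exw).
Qed.

Definition rev_rel (T : finType) (r : rel T) : rel T := fun a b => r b a.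

Lemma last_rev_belast (T : finType) (x : T) p : last (last x p) (rev (belast x p)) = x.
Proof. by case: p => [|y p] //=; rewrite rev_cons last_rcons. Qed.

Lemma mem_rev_belast (T : finType) (x : T) p z :
  (z \in last x p :: rev (belast x p)) = (z \in x :: p).
Proof. by rewrite -rev_rcons -lastI mem_rev. Qed.

Lemma dual_dom (T : finType) (r : rel T) a x y :
  (forall p, path r y p -> last y p = a -> x \in y :: p) ->
  (forall p, path (rev_rel r) a p -> last a p = y -> x \in a :: p).
Proof.
move=> H p Hp Ep.
have := H (rev (belast a p)).
rewrite -Ep rev_path last_rev_belast mem_rev_belast.
by apply.
Qed.

Lemma tdomE (T : finType) (r : rel T) t x y :
  tdom r t x y <-> sdom (rev_rel r) t x y.
Proof.
split; first exact: dual_dom.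
exact: (@dual_dom T (rev_rel r) y x t).
Qed.

Lemma sdomE (T : finType) (r : rel T) s x y :
  sdom r s x y <-> tdom (rev_rel r) s x y.
Proof.
split; first exact: (@dual_dom T r y x s).
exact: (@dual_dom T (rev_rel r) s x y).
Qed.

Lemma acyc_rev (T : finType) (r : rel T) : acyclic r -> acyclic (rev_rel r).
Proof.
move=> H x p Hp Ep.
have := H (last x p) (rev (belast x p)).
rewrite rev_path last_rev_belast => /(_ Hp (esym Ep)).
move/(congr1 size); rewrite size_rev size_belast /=.
by case: p {Hp Ep}.
Qed.

Lemma connect_revE (T : finType) (r : rel T) x y :
  connect (rev_rel r) x y = connect r y x.
Proof. exact: (connect_rev r x y). Qed.

Lemma compressed_rev (T : finType) (r : rel T) : compressed r -> compressed (rev_rel r).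
Proof.
move=> H a b eab [H1 H2].
by apply: (H b a eab); split.
Qed.

Lemma Leaf_t (T : finType) (e : rel T) t (Hac : acyclic e)
  (Hrt : forall v, connect e v t) u v :
  tdom e t u v -> v <> u -> exists w, tidom e t u w.
Proof.
move=> H nvu.
have Hac' := acyc_rev Hac.
have Hr' : forall x, connect (rev_rel e) t x by move=> x; rewrite connect_revE.
have [w [ws uw Hd Hm]] := Leaf_s Hac' Hr' (proj1 (tdomE _ _ _ _) H) nvu.
exists w; split => //.
- exact: (proj2 (tdomE _ _ _ _) Hd).
- move=> x nx Hx; apply/tdomE; apply: (Hm x nx); exact/tdomE.
Qed.

Lemma L2_t (T : finType) (e : rel T) s t (Hac : acyclic e)
  (Hr : forall v, connect e s v) (Hrt : forall v, connect e v t)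
  (Hcomp : compressed e) u v :
  tdom e t u v -> v <> u -> exists w, [/\ w <> u, tdom e t u w & ~ sdom e s w u].
Proof.
move=> H nvu.
have Hac' := acyc_rev Hac.
have Hr' : forall x, connect (rev_rel e) t x by move=> x; rewrite connect_revE.
have Hrt' : forall x, connect (rev_rel e) x s by move=> x; rewrite connect_revE.
have [w [nwu Hd Hn]] :=
  L2_s Hac' Hr' Hrt' (compressed_rev Hcomp) (proj1 (tdomE _ _ _ _) H) nvu.
exists w; split => //.
- exact: (proj2 (tdomE _ _ _ _) Hd).
- by move/sdomE.
Qed.

Lemma Superset_t (T : finType) (e : rel T) s t u w z :
  tdom e t u w -> (sdom e s z u \/ tdom e t z u) -> (sdom e s z w \/ tdom e t z w).
Proof.
move=> Huw Hz.
have := @Superset_s T (rev_rel e) t s u w z (proj1 (tdomE _ _ _ _) Huw).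
case.
- by case: Hz => Hz; [right; apply/sdomE | left; apply/tdomE].
- by move/tdomE; right.
- by move/sdomE; left.
Qed.

Lemma path_total (T : finType) (e : rel T) x p a b :
  path e x p -> a \in x :: p -> b \in x :: p -> connect e a b || connect e b a.
Proof.
elim: p x => [|y p IH] x /=.
  by rewrite !inE => _ /eqP -> /eqP ->; rewrite connect0.
move=> /andP [exy Hp].
have Hxp : path e x (y :: p) by rewrite /= exy.
rewrite (in_cons x) => /orP [/eqP ->|ha] hb.
  by rewrite (path_connect Hxp hb).
have ha' : a \in x :: y :: p by rewrite in_cons ha orbT.
move: hb; rewrite (in_cons x) => /orP [/eqP ->|hb].
  by rewrite (path_connect Hxp ha') orbT.
exact: (IH y Hp ha hb).
Qed.

Lemma mem_s_cuts (T : finType) (e : rel T) s u x :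
  (x \in s_cuts e s u) = `[< sdom e s x u >].
Proof. by rewrite /s_cuts mem_sort mem_enum inE. Qed.

Lemma mem_t_cuts (T : finType) (e : rel T) t u x :
  (x \in t_cuts e t u) = `[< tdom e t x u >].
Proof. by rewrite /t_cuts mem_sort mem_enum inE. Qed.

Lemma sorted_s_cuts (T : finType) (e : rel T) s (Hr : forall v, connect e s v) u :
  sorted (connect e) (s_cuts e s u).
Proof.
rewrite /s_cuts; apply: (sort_sorted_in (P := [set x | `[< sdom e s x u >]])).
  move=> a b; rewrite !inE => /asboolP Ha /asboolP Hb.
  case/connectP: (Hr u) => p Hp Ep.
  exact: (path_total Hp (Ha p Hp (esym Ep)) (Hb p Hp (esym Ep))).
by apply/allP => x; rewrite mem_enum.
Qed.

Lemma sorted_t_cuts (T : finType) (e : rel T) t (Hrt : forall v, connect e v t) u :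
  sorted (connect e) (t_cuts e t u).
Proof.
rewrite /t_cuts; apply: (sort_sorted_in (P := [set x | `[< tdom e t x u >]])).
  move=> a b; rewrite !inE => /asboolP Ha /asboolP Hb.
  case/connectP: (Hrt u) => p Hp Ep.
  exact: (path_total Hp (Ha p Hp (esym Ep)) (Hb p Hp (esym Ep))).
by apply/allP => x; rewrite mem_enum.
Qed.

Lemma t_cuts_head (T : finType) (e : rel T) t (Hac : acyclic e)
  (Hrt : forall v, connect e v t) u :
  t_cuts e t u = u :: behead (t_cuts e t u).
Proof.
have So : pairwise (connect e) (t_cuts e t u).
  by rewrite -(sorted_pairwise (@connect_trans T e)); exact: sorted_t_cuts.
have uin : u \in t_cuts e t u by rewrite mem_t_cuts; apply/asboolP; exact: tdom_refl.
have hin : forall h, h \in t_cuts e t u -> connect e u h.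
  move=> h; rewrite mem_t_cuts => /asboolP Hh; exact: (tdom_connect Hrt Hh).
move: So uin hin; case: (t_cuts e t u) => [|h l] //= So uin hin.
have -> // : h = u.
move: uin; rewrite in_cons => /orP [/eqP -> //|ul].
move: So => /andP [/allP Hh _].
exact: (no_cycle Hac (Hh u ul) (hin h (mem_head _ _))).
Qed.

Lemma mem_ext (T : finType) (e : rel T) s t (Hac : acyclic e)
  (Hrt : forall v, connect e v t) u x :
  x \in ext e s t u <-> sdom e s x u \/ tdom e t x u.
Proof.
have E := t_cuts_head Hac Hrt u.
rewrite /ext mem_cat mem_s_cuts; split.
  case/orP => [/asboolP H|H]; first by left.
  right; apply/asboolP; rewrite -mem_t_cuts E in_cons H orbT //.
case=> [H|H]; first by apply/orP; left; apply/asboolP.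
have : x \in t_cuts e t u by rewrite mem_t_cuts; apply/asboolP.
rewrite E in_cons => /orP [/eqP ->|->]; last by rewrite orbT.
by apply/orP; left; apply/asboolP; exact: sdom_refl.
Qed.

Lemma ext_sorted (T : finType) (e : rel T) s t (Hac : acyclic e)
  (Hr : forall v, connect e s v) (Hrt : forall v, connect e v t) u :
  is_sequence e (ext e s t u).
Proof.
rewrite /is_sequence /ext !(sorted_pairwise (@connect_trans T e)) pairwise_cat.
have S1 := sorted_s_cuts Hr u; have S2 := sorted_t_cuts Hrt u.
rewrite (sorted_pairwise (@connect_trans T e)) in S1.
rewrite (sorted_pairwise (@connect_trans T e)) (t_cuts_head Hac Hrt u) in S2.
move: S2; rewrite pairwise_cons => /andP [_ ->]; rewrite S1 !andbT.
apply/allrelP => a b; rewrite mem_s_cuts => /asboolP Ha Hb.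
have Hb' : b \in t_cuts e t u by rewrite (t_cuts_head Hac Hrt u) in_cons Hb orbT.
move: Hb'; rewrite mem_t_cuts => /asboolP Hb'.
exact: (connect_trans (sdom_connect Hr Ha) (tdom_connect Hrt Hb')).
Qed.

Lemma st_cat (T : finType) (e : rel T) s t v p q :
  path e s p -> last s p = v -> path e v q -> last v q = t ->
  st_path e s t (s :: (p ++ q)).
Proof.
move=> Hp Ep Hq Eq; exists (p ++ q); split => //.
  by rewrite cat_path Hp Ep Hq.
by rewrite last_cat Ep.
Qed.

Lemma ext_sub_path (T : finType) (e : rel T) s t (Hac : acyclic e)
  (Hrt : forall v, connect e v t) u P :
  st_path e s t P -> u \in P -> {subset ext e s t u <= P}.
Proof.
move=> [p [-> Hp Ep]] uin x /(mem_ext _ Hac Hrt) Hx.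
move: Hp Ep; case/splitPl: uin => p1 p2 E1.
rewrite cat_path last_cat E1 => /andP [H1 H2] E2.
case: Hx => Hx.
  by rewrite -cat_cons mem_cat (Hx p1 H1 E1).
move: (Hx p2 H2 E2); rewrite in_cons => /orP [/eqP ->|xp2].
  by rewrite -cat_cons mem_cat -E1 mem_last.
by rewrite -cat_cons mem_cat xp2 orbT.
Qed.

Lemma ext_safe (T : finType) (e : rel T) s t (Hac : acyclic e)
  (Hr : forall v, connect e s v) (Hrt : forall v, connect e v t) u :
  safe e s t (ext e s t u).
Proof.
split.
- exact: ext_sorted.
- case/connectP: (Hr u) => p Hp Ep; case/connectP: (Hrt u) => q Hq Eq.
  exists (s :: (p ++ q)); split; first exact: (st_cat Hp (esym Ep) Hq (esym Eq)).
  apply: (ext_sub_path Hac Hrt (st_cat Hp (esym Ep) Hq (esym Eq))).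
  by rewrite -cat_cons mem_cat Ep mem_last.
- move=> C [HC1 HC2]; have [P PC uP] := HC2 u.
  exists P => //; exact: (ext_sub_path Hac Hrt (HC1 P PC) uP).
Qed.

Lemma build_cover (T : finType) (e : rel T) s t (G : seq T -> Prop) :
  (forall v, exists P, [/\ st_path e s t P, v \in P & G P]) ->
  exists C, path_cover e s t C /\ forall P, P \in C -> G P.
Proof.
move=> H.
suff Hl : forall l : seq T, exists C : seq (seq T), [/\ forall P, P \in C -> st_path e s t P,
    forall v, v \in l -> (exists2 P, P \in C & v \in P) &
    forall P, P \in C -> G P].
  have [C [H1 H2 H3]] := Hl (enum T).
  exists C; split => //; split => // v; apply: H2; by rewrite mem_enum.
elim=> [|v l [C [H1 H2 H3]]].
  by exists [::]; split.
have [P [HP vP GP]] := H v.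
exists (P :: C); split.
- by move=> Q; rewrite in_cons => /orP [/eqP ->|]; [| apply: H1].
- move=> x; rewrite in_cons => /orP [/eqP ->|xl].
    by exists P => //; exact: mem_head.
  have [Q QC xQ] := H2 x xl; exists Q => //; by rewrite in_cons QC orbT.
- by move=> Q; rewrite in_cons => /orP [/eqP ->|]; [| apply: H3].
Qed.

Unset Implicit Arguments.
Set Strict Implicit.

Theorem theorem4 (T : finType) (e : rel T) (s t : T) (u : T) :
  st_dag e s t -> compressed e ->
  (max_safe e s t (ext e s t u) <-> (sleaf e s u /\ tleaf e t u)).
Proof.
move=> [Hac Hsrc Hsnk Hr Hrt] Hcomp.
have ME := mem_ext s Hac Hrt.
split.
- move=> [_ Hmax]; split.
  + move=> v [_ nuv Huv _].
    have [w [nwu Huw ntd]] := L2_s Hac Hr Hrt Hcomp Huv (fun E => nuv (esym E)).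
    apply: Hmax; exists (ext e s t w); split.
    * exact: ext_safe.
    * move=> x /ME Hx; apply/ME; exact: (Superset_s Huw Hx).
    * exists w; first by apply/ME; left; exact: sdom_refl.
      apply/negP => /ME [H|H].
        by apply: nwu; exact: (sdom_antisym Hac Hr H Huw).
      by apply: ntd.
  + move=> v [_ nuv Huv _].
    have [w [nwu Huw nsd]] := L2_t Hac Hr Hrt Hcomp Huv (fun E => nuv (esym E)).
    apply: Hmax; exists (ext e s t w); split.
    * exact: ext_safe.
    * move=> x /ME Hx; apply/ME; exact: (Superset_t Huw Hx).
    * exists w; first by apply/ME; right; exact: tdom_refl.
      apply/negP => /ME [H|H].
        by apply: nsd.
      by apply: nwu; exact: (tdom_antisym Hac Hrt H Huw).
- move=> [Hsl Htl]; split; first exact: ext_safe.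
  move=> [Y [[_ _ HC] Hsub [y yY nyx]]].
  have nys : ~ sdom e s y u by move=> H; move/negP: nyx; apply; apply/ME; left.
  have nyt : ~ tdom e t y u by move=> H; move/negP: nyx; apply; apply/ME; right.
  have Hgood : forall v, exists P, [/\ st_path e s t P, v \in P & (u \notin P \/ y \notin P)].
  move=> v; case: (eqVneq v u) => [->|nvu].
    have [p [Hp Ep yp]] := not_sdom nys.
    have [q [Hq Eq yq]] := not_tdom nyt.
    exists (s :: (p ++ q)); split.
    + exact: (st_cat Hp Ep Hq Eq).
    + by rewrite -cat_cons mem_cat -Ep mem_last.
    + right; rewrite -cat_cons mem_cat (negbTE yp) /=.
      by move: yq; rewrite in_cons negb_or => /andP [_].
  case: (pselect (sdom e s u v)) => [Hd|nd].
    by have [w Hw] := Leaf_s Hac Hr Hd (elimN eqP nvu) ; exfalso; apply: (Hsl w).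
  case: (pselect (tdom e t u v)) => [Hd|nt].
    by have [w Hw] := Leaf_t Hac Hrt Hd (elimN eqP nvu) ; exfalso; apply: (Htl w).
  have [p [Hp Ep up]] := not_sdom nd.
  have [q [Hq Eq uq]] := not_tdom nt.
  exists (s :: (p ++ q)); split.
  + exact: (st_cat Hp Ep Hq Eq).
  + by rewrite -cat_cons mem_cat -Ep mem_last.
  + left; rewrite -cat_cons mem_cat (negbTE up) /=.
    by move: uq; rewrite in_cons negb_or => /andP [_].
  have [C [Hcov HG]] := @build_cover T e s t (fun P => u \notin P \/ y \notin P) Hgood.
  have [P PC HP] := HC C Hcov.
  have uP : u \in P by apply: HP; apply: Hsub; apply/ME; left; exact: sdom_refl.
  have yP := HP y yY.
  by case: (HG P PC); rewrite ?uP ?yP.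
Qed.
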